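(* Let $S\ge 2$ and $H\ge S$. Suppose all sending sub-networks use the same family of likelihoods $L(\theta)$, $\theta=1,\ldots,H$, where $L(\theta)$ is the unit-variance Gaussian density with mean $\mathsf{m}_\theta$ and the means $\mathsf{m}_1,\ldots,\mathsf{m}_H$ are distinct; and suppose the true distribution $f^{(s)}$ of sending sub-network $s$ ($s=1,\ldots,S$) is the unit-variance Gaussian with mean $\nu_s\in\{\mathsf{m}_1,\ldots,\mathsf{m}_H\}$, where $\nu_1,\ldots,\nu_S$ are distinct. Let $D=[d_{\theta s}]\in\mathbb{R}^{H\times S}$ with $d_{\theta s}=D[f^{(s)}\|L(\theta)]=\tfrac12(\mathsf{m}_\theta-\nu_s)^2$. Let $k$ be a receiving agent with aggregate weight vector $x_k=[x_{1k},\ldots,x_{Sk}]^\top$, and assume that $\theta\mapsto\sum_{s=1}^S d_{\theta s}x_{sk}$ has a unique minimizer $\theta^\star_k$ over $\{1,\ldots,H\}$. Define $B_k=(\mathbb{1}_He_{\theta^\star_k}^\top-I_H)D$ and $C_k=\begin{bmatrix}B_k\\ \mathbb{1}_S^\top\end{bmatrix}$. Then $\mathrm{rank}(C_k)=2$.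
   Context: Setting: a weakly-connected network in which the agents are partitioned into sending sub-networks $\mathcal{N}_1,\ldots,\mathcal{N}_S$ and receiving sub-networks; the (left-stochastic, nonnegative) combination matrix $A$ has block form $\begin{bmatrix}A_{\mathcal{S}}&A_{\mathcal{S}\mathcal{R}}\\0&A_{\mathcal{R}}\end{bmatrix}$ with $A_{\mathcal{S}}=\mathrm{blockdiag}\{A_{\mathcal{N}_1},\ldots,A_{\mathcal{N}_S}\}$, each sending sub-network strongly connected with Perron vector $p^{(s)}$, each receiving sub-network connected and linked to at least one agent of each sending sub-network. With $E=\mathrm{blockdiag}\{p^{(s)}\mathbb{1}^\top_{N_s}\}$ and $\Omega=[\omega_{\ell k}]=EA_{\mathcal{S}\mathcal{R}}(I-A_{\mathcal{R}})^{-1}$ (the top-right block of $\lim_i A^i$), the aggregate weight from sending sub-network $s$ to receiving agent $k$ is $x_{sk}=\sum_{\ell\in\mathcal{N}_s}\omega_{\ell k}$; these are strictly positive and $\sum_s x_{sk}=1$. Within each sending sub-network all agents share the same true distribution $f^{(s)}$ and likelihoods. $D[f\|g]$ denotes KL divergence, $e_m$ the $m$-th canonical basis vector of $\mathbb{R}^H$, $\mathbb{1}_L$ the all-ones vector. *)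

(* Defs.v *)
From mathcomp Require Import all_boot all_order all_algebra.
From mathcomp Require Import reals.
Set Implicit Arguments. Unset Strict Implicit. Unset Printing Implicit Defensive.
Import Order.TTheory GRing.Theory Num.Theory.
Local Open Scope ring_scope.

Definition kl_gauss (R : realType) (nu m : R) : R := (m - nu) ^+ 2 / 2.

Definition Dmat (R : realType) (H S : nat) (m : 'I_H -> R) (nu : 'I_S -> R)
  : 'M[R]_(H, S) := \matrix_(th < H, s < S) kl_gauss (nu s) (m th).

Definition Bmat (R : realType) (H S : nat) (Dm : 'M[R]_(H, S)) (thstar : 'I_H)
  : 'M[R]_(H, S) :=
  ((const_mx 1 : 'cV[R]_H) *m (delta_mx 0 thstar : 'rV[R]_H) - 1%:M) *m Dm.

Definition Cmat (R : realType) (H S : nat) (Dm : 'M[R]_(H, S)) (thstar : 'I_H)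
  : 'M[R]_(H + 1, S) := col_mx (Bmat Dm thstar) (const_mx 1 : 'rV[R]_S).

(* Main.v *)
Require Import Defs.
From mathcomp Require Import all_boot all_order all_algebra.
From mathcomp Require Import reals.
From mathcomp Require Import ring lra.
Import Order.TTheory GRing.Theory Num.Theory.
Local Open Scope ring_scope.

Theorem theorem2 (R : realType) (S H : nat)
  (hS : (2 <= S)%N) (hH : (S <= H)%N)
  (m : 'I_H -> R) (m_inj : injective m)
  (nu : 'I_S -> R) (nu_inj : injective nu)
  (nu_in : forall s, exists th, nu s = m th)
  (x : 'I_S -> R) (x_pos : forall s, 0 < x s) (x_sum : \sum_(s < S) x s = 1)
  (thstar : 'I_H)
  (thstar_unique_min : forall th : 'I_H, th != thstar ->
     \sum_(s < S) (Dmat m nu) thstar s * x s < \sum_(s < S) (Dmat m nu) th s * x s) :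
  \rank (Cmat (Dmat m nu) thstar) = 2%N.
Proof.
set c := (const_mx 1 : 'rV[R]_S).
set n := (\row_s nu s : 'rV[R]_S).
set V := col_mx c n.
set B := Bmat (Dmat m nu) thstar.
have Bij : forall i s, B i s =
   ((m thstar)^+2 - (m i)^+2)/2 - (m thstar - m i) * nu s.
  move=> i s; rewrite /B /Bmat mulmxBl -mulmxA -rowE mul1mx !mxE big_ord1 !mxE.
  by rewrite /kl_gauss; field.
have eB : Bmat (Dmat m nu) thstar = B by [].
clearbody B.
have cV : (c <= V)%MS by have := submx_refl V; rewrite col_mx_sub => /andP[].
have nV : (n <= V)%MS by have := submx_refl V; rewrite col_mx_sub => /andP[].
have CV : (Cmat (Dmat m nu) thstar <= V)%MS.
  rewrite /Cmat eB col_mx_sub cV andbT; apply/row_subP => k.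
  have -> : row k B = (((m thstar)^+2 - (m k)^+2)/2) *: c + (- (m thstar - m k)) *: n.
    by apply/matrixP => u0 v0; rewrite !mxE Bij; ring.
  by rewrite addmx_sub // scalemx_sub.
have H0 : (0 < H)%N by apply: leq_trans hH; apply: leq_trans hS.
have H1 : (1 < H)%N by apply: leq_trans hH.
pose o0 : 'I_H := Ordinal H0.
pose o1 : 'I_H := Ordinal H1.
have [th hth] : exists th : 'I_H, th != thstar.
  case: (eqVneq thstar o0) => [->|h]; last by exists o0; rewrite eq_sym.
  by exists o1.
have hm : m thstar - m th != 0.
  by rewrite subr_eq0; apply/eqP => /m_inj /eqP; rewrite eq_sym (negbTE hth).
have VC : (V <= Cmat (Dmat m nu) thstar)%MS.
  have := submx_refl (Cmat (Dmat m nu) thstar).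
  rewrite /Cmat eB col_mx_sub => /andP[BC cC].
  rewrite /V col_mx_sub cC andTb.
  have -> : n = (- (m thstar - m th)^-1) *: row th B
     + (((m thstar)^+2 - (m th)^+2)/2 / (m thstar - m th)) *: c.
    by apply/matrixP => u0 v0; rewrite !mxE Bij; field; exact: hm.
  rewrite addmx_sub // scalemx_sub //.
  exact: submx_trans (row_sub _ _) BC.
have -> : \rank (Cmat (Dmat m nu) thstar) = \rank V.
  by apply/eqP; rewrite eqn_leq !mxrankS.
apply/eqP; rewrite eqn_leq rank_leq_row /=.
have S0 : (0 < S)%N by apply: leq_trans hS.
pose s0 : 'I_S := Ordinal S0.
pose s1 : 'I_S := Ordinal hS.
have crank : \rank c = 1%N.
  rewrite rank_rV; suff -> : c != 0 by []; apply/eqP => /matrixP /(_ 0 s0); rewrite !mxE.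
  by move/eqP; rewrite oner_eq0.
suff : (\rank c < \rank V)%N by rewrite crank.
apply: rank_ltmx.
rewrite ltmxE cV /=; apply/negP => Vc.
have /sub_rVP [a ha] := submx_trans nV Vc.
have e0 := congr1 (fun M : 'rV[R]_S => M 0 s0) ha.
have e1 := congr1 (fun M : 'rV[R]_S => M 0 s1) ha.
move: e0 e1; rewrite /= !mxE => e0 e1.
have : s0 = s1 by apply: nu_inj; rewrite e0 e1.
by move/(congr1 val).
Qed.
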